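(* Let $n\geq 3$ and let $k\in\mathbb{Z}_n$ with $k\neq 0$ and $2k\not\equiv 0\pmod n$. Let $C$ be a subset of the vertex set of $\mathrm{GP}(n,k)$. Then $C$ is a total perfect code in $\mathrm{GP}(n,k)$ if and only if one of the following holds: (i) $n\equiv 0\pmod 3$, $k\not\equiv 0\pmod 3$, and $C=C_j:=\{u_{3i+j},v_{3i+j}\mid i\in\mathbb{Z}_n\}$ for some $j\in\{0,1,2\}$; (ii) $n\equiv 0\pmod 6$, $k\equiv \pm 1\pmod 6$, and $C=C'_j:=\{u_{6i+j},u_{6i+j+1},v_{6i+j+3},v_{6i+j+4}\mid i\in\mathbb{Z}_n\}$ for some $j\in\{0,1,2,3,4,5\}$ (all indices modulo $n$).
   Context: For an integer $n\geq 3$ and a nonzero $k\in\mathbb{Z}_n$, the generalized Petersen graph $\mathrm{GP}(n,k)$ is the simple graph with vertex set $\{u_i,v_i\mid i\in\mathbb{Z}_n\}$ and edges $u_iu_{i+1}$, $u_iv_i$, $v_iv_{i+k}$ for all $i\in\mathbb{Z}_n$ (indices modulo $n$). Standing assumption: $2k\not\equiv 0\pmod n$, so that $\mathrm{GP}(n,k)$ is 3-regular. Congruences of $k$ modulo divisors of $n$ are well defined. A total perfect code in a graph $\Gamma$ is a set $C\subseteq V(\Gamma)$ such that every vertex of $\Gamma$ (whether in $C$ or not) is adjacent to exactly one vertex of $C$. *)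

(* Defs.v *)
From mathcomp Require Import all_boot.
Set Implicit Arguments. Unset Strict Implicit. Unset Printing Implicit Defensive.

(* Vertices of GP(n,k): pairs (i, b) with i : 'I_n;
   (i, false) is u_i and (i, true) is v_i.  Index arithmetic is modulo n. *)
Definition gpvert (n : nat) := ('I_n * bool)%type.

Definition gp_adj (n : nat) (k : 'I_n) (x y : gpvert n) : bool :=
  let i := val x.1 in let j := val y.1 in
  match x.2, y.2 with
  | false, false => (j == (i + 1) %% n) || (i == (j + 1) %% n)
  | true, true => (j == (i + k) %% n) || (i == (j + k) %% n)
  | _, _ => i == j
  end.

Definition total_perfect_code (n : nat) (k : 'I_n) (C : {set gpvert n}) : Prop :=
  forall x : gpvert n, #|[set y in C | gp_adj k x y]| = 1.

Definition Cj (n j : nat) : {set gpvert n} :=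
  [set x : gpvert n | [exists i : 'I_n, val x.1 == (3 * i + j) %% n]].

Definition Cpj (n j : nat) : {set gpvert n} :=
  [set x : gpvert n | [exists i : 'I_n,
     if x.2 then (val x.1 == (6 * i + j + 3) %% n) || (val x.1 == (6 * i + j + 4) %% n)
     else (val x.1 == (6 * i + j) %% n) || (val x.1 == (6 * i + j + 1) %% n)]].

(* Main.v *)
Require Import Defs.
From mathcomp Require Import all_boot.
From mathcomp Require Import zify.
Set Implicit Arguments. Unset Strict Implicit. Unset Printing Implicit Defensive.


Definition ex1 (a b c : bool) := (a + b + c == 1)%N.

Inductive tree := Leaf of nat * nat * nat | Node of nat & tree & tree.

Definition enc (b p q : nat) := (p * 5 + q) * 2 + b.
Definition consU := [seq (enc 0 p q, enc 0 (p+2) q, enc 1 (p+1) q) | p <- iota 0 7, q <- iota 0 5].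
Definition consV := [seq (enc 1 p q, enc 1 p (q+2), enc 0 p (q+1)) | p <- iota 0 9, q <- iota 0 3].
Definition cons := consU ++ consV.
Definition goal := (enc 0 2 2, enc 0 4 2, enc 0 6 2).

Fixpoint look (rho : seq (nat * bool)) (v : nat) : option bool :=
  if rho is (w, b) :: r then if w == v then Some b else look r v else None.

Definition viol rho (c : nat * nat * nat) :=
  let: (a, b, d) := c in
  match look rho a, look rho b, look rho d with
  | Some true, Some true, _ => true
  | Some true, _, Some true => true
  | _, Some true, Some true => true
  | Some false, Some false, Some false => true
  | _, _, _ => false end.

Definition satf rho (c : nat * nat * nat) :=
  let: (a, b, d) := c in
  match look rho a, look rho b, look rho d with
  | Some x, Some y, Some z => ex1 x y z
  | _, _, _ => false end.

Fixpoint check rho t := match t with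
  | Leaf c => ((c \in cons) && viol rho c) || ((c == goal) && satf rho c)
  | Node v t0 t1 => check ((v, false) :: rho) t0 && check ((v, true) :: rho) t1
  end.

Definition agree (s : nat -> bool) rho := all (fun vb => s vb.1 == vb.2) rho.
Definition ex1n (s : nat -> bool) (c : nat * nat * nat) :=
  let: (a, b, d) := c in ex1 (s a) (s b) (s d).

Lemma look_spec s rho v : agree s rho ->
  match look rho v with Some b => s v = b | None => True end.
Proof.
elim: rho => //= [[w b] r IH] /andP [/eqP H1 H2].
case: eqP => [<-|_] //; exact: IH.
Qed.

Lemma viol_sound s rho c : agree s rho -> viol rho c -> ~~ ex1n s c.
Proof.
case: c => [[a b] d] Hag /=.
have := look_spec a Hag; have := look_spec b Hag; have := look_spec d Hag.
case: (look rho a) => [[]|]; case: (look rho b) => [[]|]; case: (look rho d) => [[]|] //=;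
  move=> Hd Hb Ha _; rewrite ?Ha ?Hb ?Hd /ex1;
  by case: (s a); case: (s b); case: (s d).
Qed.

Lemma satf_sound s rho c : agree s rho -> satf rho c -> ex1n s c.
Proof.
case: c => [[a b] d] Hag /=.
have := look_spec a Hag; have := look_spec b Hag; have := look_spec d Hag.
case: (look rho a) => [x|]; case: (look rho b) => [y|]; case: (look rho d) => [z|] //=.
by move=> -> -> ->.
Qed.

Lemma check_sound t : forall rho s, check rho t -> agree s rho ->
  (forall c, c \in cons -> ex1n s c) -> ex1n s goal.
Proof.
elim: t => [c|v t0 IH0 t1 IH1] rho s /=.
  case/orP => /andP [Hc Hv] Hag Hcons.
    by move: (viol_sound Hag Hv); rewrite Hcons.
  by rewrite (eqP Hc) in Hv; exact: satf_sound Hag Hv.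
case/andP => H0 H1 Hag Hcons.
case Esv: (s v).
  by apply: (IH1 _ _ H1) => //; rewrite /agree /= Esv eqxx.
by apply: (IH0 _ _ H0) => //; rewrite /agree /= Esv eqxx.
Qed.
Definition cert : tree := (Node 24 (Node 44 (Node 35 (Leaf (24,44,35)) (Node 31 (Node 32 (Node 39 (Node 36 (Node 64 (Node 55 (Leaf (44,64,55)) (Node 51 (Node 52 (Node 43 (Leaf (32,52,43)) (Node 47 (Node 56 (Leaf (36,56,47)) (Leaf (55,59,56))) (Leaf (43,47,44)))) (Leaf (51,55,52))) (Leaf (51,55,52)))) (Leaf (24,44,64))) (Leaf (35,39,36))) (Leaf (35,39,36))) (Leaf (31,35,32))) (Leaf (31,35,32)))) (Node 35 (Node 64 (Leaf (24,44,64)) (Leaf (44,64,55))) (Leaf (24,44,35)))) (Node 4 (Node 15 (Node 44 (Node 35 (Node 23 (Node 27 (Node 64 (Leaf (24,44,64)) (Node 55 (Node 84 (Node 75 (Node 63 (Node 67 (Node 12 (Node 32 (Leaf (12,32,23)) (Node 52 (Node 43 (Node 72 (Leaf (52,72,63)) (Node 11 (Leaf (11,15,12)) (Node 0 (Node 20 (Node 31 (Node 40 (Leaf (20,40,31)) (Node 60 (Node 51 (Leaf (51,55,52)) (Leaf (40,60,51))) (Leaf (40,60,51)))) (Leaf (31,35,32))) (Leaf (0,20,11))) (Leaf (0,20,11))))) (Leaf (32,52,43))) (Leaf (32,52,43)))) (Node 32 (Node 11 (Node 31 (Leaf (31,35,32)) (Node 20 (Node 0 (Leaf (0,20,11)) (Node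 40 (Node 16 (Node 36 (Leaf (16,36,27)) (Node 56 (Node 47 (Node 76 (Leaf (56,76,67)) (Node 19 (Leaf (15,19,16)) (Node 8 (Node 28 (Node 39 (Node 48 (Leaf (28,48,39)) (Node 68 (Node 59 (Leaf (55,59,56)) (Leaf (48,68,59))) (Leaf (48,68,59)))) (Leaf (35,39,36))) (Leaf (8,28,19))) (Leaf (8,28,19))))) (Leaf (36,56,47))) (Leaf (36,56,47)))) (Node 36 (Node 19 (Node 39 (Leaf (35,39,36)) (Node 28 (Node 8 (Leaf (8,28,19)) (Node 48 (Node 52 (Node 43 (Leaf (32,52,43)) (Node 72 (Leaf (52,72,63)) (Node 47 (Node 56 (Leaf (36,56,47)) (Node 76 (Node 51 (Leaf (51,55,52)) (Node 60 (Node 59 (Node 68 (Leaf (48,68,59)) (Node 88 (Node 79 (Leaf (75,79,76)) (Leaf (68,88,79))) (Leaf (68,88,79)))) (Leaf (55,59,56))) (Leaf (40,60,51)))) (Leaf (56,76,67)))) (Leaf (43,47,44))))) (Node 43 (Node 72 (Node 47 (Leaf (43,47,44)) (Node 56 (Node 76 (Leaf (56,76,67)) (Node 51 (Node 60 (Leaf (40,60,51)) (Node 80 (Node 71 (Leaf (71,75,72)) (Leaf (60,80,71))) (Leaf (60,80,71)))) (Leaf (51,55,52)))) (Leaf (36,56,47)))) (Leaf (52,72,63))) (Leaf (32,52,43)))) (Leaf (28,48,39)))) (Leaf (28,48,39)))) (Leaf (15,19,16))) (Leaf (16,36,27)))) (Leaf (20,40,31)))) (Leaf (20,40,31)))) (Leaf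 (11,15,12))) (Leaf (12,32,23)))) (Leaf (63,67,64))) (Leaf (63,67,64))) (Leaf (64,84,75))) (Leaf (64,84,75))) (Leaf (44,64,55)))) (Leaf (23,27,24))) (Leaf (23,27,24))) (Leaf (24,44,35))) (Leaf (24,44,35))) (Leaf (4,24,15))) (Leaf (4,24,15)))).

Lemma cert_ok : check [::] cert.
Proof. by vm_compute. Qed.


Definition sig_of (X Y : nat -> nat -> bool) (v : nat) : bool :=
  let w := v %/ 2 in
  if v %% 2 == 1 then Y (w %/ 5) (w %% 5) else X (w %/ 5) (w %% 5).

Lemma sig_X X Y p q : q < 5 -> sig_of X Y (enc 0 p q) = X p q.
Proof.
move=> Hq; rewrite /sig_of /enc.
have -> : ((p * 5 + q) * 2 + 0) %% 2 == 1 = false by apply/eqP; lia.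
have -> : ((p * 5 + q) * 2 + 0) %/ 2 %/ 5 = p by lia.
have -> : ((p * 5 + q) * 2 + 0) %/ 2 %% 5 = q by lia.
by [].
Qed.

Lemma sig_Y X Y p q : q < 5 -> sig_of X Y (enc 1 p q) = Y p q.
Proof.
move=> Hq; rewrite /sig_of /enc.
have -> : ((p * 5 + q) * 2 + 1) %% 2 == 1 = true by apply/eqP; lia.
have -> : ((p * 5 + q) * 2 + 1) %/ 2 %/ 5 = p by lia.
have -> : ((p * 5 + q) * 2 + 1) %/ 2 %% 5 = q by lia.
by [].
Qed.

Lemma local (X Y : nat -> nat -> bool) :
  (forall p q, p < 7 -> q < 5 -> ex1 (X p q) (X (p+2) q) (Y (p+1) q)) ->
  (forall p q, p < 9 -> q < 3 -> ex1 (Y p q) (Y p (q+2)) (X p (q+1))) ->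
  ex1 (X 2 2) (X 4 2) (X 6 2).
Proof.
move=> HU HV.
have := check_sound cert_ok (s := sig_of X Y) (erefl true).
rewrite /goal /= !sig_X //; apply => c; rewrite mem_cat => /orP [].
  case/allpairsP => [[p q] [Hp Hq ->]] /=.
  move: Hp Hq; rewrite !mem_iota /= => Hp Hq.
  rewrite !sig_X ?sig_Y; try lia.
  apply: HU; lia.
case/allpairsP => [[p q] [Hp Hq ->]] /=.
move: Hp Hq; rewrite !mem_iota /= => Hp Hq.
rewrite !sig_Y ?sig_X; try lia.
apply: HV; lia.
Qed.


Definition U (n' m : nat) : gpvert n'.+1 := (inord (m %% n'.+1), false).
Definition V (n' m : nat) : gpvert n'.+1 := (inord (m %% n'.+1), true).

Lemma val_inord_mod n' m : nat_of_ord (inord (m %% n'.+1) : 'I_n'.+1) = m %% n'.+1.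
Proof. by rewrite inordK // ltn_pmod. Qed.

Lemma val_inord_mod' n' m : val (inord (m %% n'.+1) : 'I_n'.+1) = m %% n'.+1.
Proof. exact: val_inord_mod. Qed.

Lemma eq_ord_mod n' (j : 'I_n'.+1) m : (j == inord (m %% n'.+1)) = (val j == m %% n'.+1).
Proof. by rewrite -val_eqE /= val_inord_mod. Qed.

Lemma adjU n' (k : 'I_n'.+1) m y :
  gp_adj k (U n' (m + 1)) y = [|| y == U n' m, y == U n' (m + 2) | y == V n' (m + 1)].
Proof.
case: y => j [] /=; rewrite /gp_adj /U /V /= !xpair_eqE /= !andbT !andbF /=
   ?eq_ord_mod val_inord_mod //.
rewrite modnDml -addnA /= eqn_modDr (modn_small (ltn_ord j)) orbC.
by rewrite orbF (eq_sym (m %% _)).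
Qed.

Lemma adjV n' (k : 'I_n'.+1) m y :
  gp_adj k (V n' (m + k)) y = [|| y == V n' m, y == V n' (m + 2 * k) | y == U n' (m + k)].
Proof.
case: y => j [] /=; rewrite /gp_adj /U /V /= !xpair_eqE /= !andbT !andbF /=
   ?eq_ord_mod val_inord_mod //.
  rewrite modnDml -addnA addnn -mul2n eqn_modDr (modn_small (ltn_ord j)) orbC.
  by rewrite orbF (eq_sym (m %% _)).
Qed.

Lemma card3 (T : finType) (C : {set T}) (P : pred T) a b c :
  uniq [:: a; b; c] -> (forall y, P y = [|| y == a, y == b | y == c]) ->
  #|[set y in C | P y]| = (a \in C) + (b \in C) + (c \in C).
Proof.
move=> Hu HP.
have -> : [set y in C | P y] = [set y in [seq z <- [:: a; b; c] | z \in C]].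
  by apply/setP => y; rewrite !inE mem_filter HP !inE andbC.
rewrite cardsE (card_uniqP _) ?filter_uniq // size_filter /=.
by case: (a \in C); case: (b \in C); case: (c \in C).
Qed.

Lemma U_val n' (i : 'I_n'.+1) c : U n' (i + c * n'.+1) = (i, false).
Proof. by rewrite /U addnC modnMDl modn_small // inord_val. Qed.
Lemma V_val n' (i : 'I_n'.+1) c : V n' (i + c * n'.+1) = (i, true).
Proof. by rewrite /V addnC modnMDl modn_small // inord_val. Qed.

Lemma U_val1 n' (i : 'I_n'.+1) : U n' (i + n'.+1) = (i, false).
Proof. by have := U_val i 1; rewrite mul1n. Qed.
Lemma V_val1 n' (i : 'I_n'.+1) : V n' (i + n'.+1) = (i, true).
Proof. by have := V_val i 1; rewrite mul1n. Qed.

Lemma tpc_eq n' (k : 'I_n'.+1) C : 2 < n'.+1 -> (2 * k) %% n'.+1 != 0 ->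
  total_perfect_code k C <->
  forall m, ex1 (U n' m \in C) (U n' (m + 2) \in C) (V n' (m + 1) \in C)
         && ex1 (V n' m \in C) (V n' (m + 2 * k) \in C) (U n' (m + k) \in C).
Proof.
move=> Hn Hk.
have uU : forall m, uniq [:: U n' m; U n' (m + 2); V n' (m + 1)].
  move=> m; rewrite /= !inE /U /V !xpair_eqE !andbF !andbT !orbF /= eq_ord_mod ?andbT.
  rewrite val_inord_mod' -{1}(addn0 m) eqn_modDl mod0n modn_small //.
have uV : forall m, uniq [:: V n' m; V n' (m + 2 * k); U n' (m + k)].
  move=> m; rewrite /= !inE /U /V !xpair_eqE !andbF !andbT !orbF /= eq_ord_mod ?andbT.
  by rewrite val_inord_mod' -{1}(addn0 m) eqn_modDl mod0n eq_sym.
split.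
  move=> H m; apply/andP; split.
    by rewrite /ex1 -(card3 _ (uU m) (adjU k m)) H.
  by rewrite /ex1 -(card3 _ (uV m) (adjV k m)) H.
move=> H [i []].
  have := (andP (H (i + (n'.+1 - k)))).2.
  rewrite /ex1 -(card3 _ (uV _) (adjV k _)) -addnA subnK; last exact: ltnW.
  by rewrite V_val1 => /eqP.
have := (andP (H (i + n'))).1.
rewrite /ex1 -(card3 _ (uU _) (adjU k _)) -addnA addn1.
by rewrite U_val1 => /eqP.
Qed.


Definition fl (l : seq bool) i := nth false l (i %% 6).
Definition good l kk := all (fun m =>
  ex1 (fl l m) (fl l (m + 2)) (fl l (m + 4)) &&
  ex1 (fl l (m + 3)) (fl l (m + 2 * kk + 3)) (fl l (m + kk))) (iota 0 6).
Definition hyp l r kk := good l kk && all (fun m => fl l (m + r) == fl l m) (iota 0 6).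
Definition l3 j := [seq i %% 3 == j | i <- iota 0 6].
Definition l6 j := [seq (i == j) || (i == (j + 1) %% 6) | i <- iota 0 6].
Definition concl l r kk :=
  [&& r %% 3 == 0, kk %% 3 != 0 & has (fun j => l == l3 j) (iota 0 3)] ||
  [&& r == 0, (kk == 1) || (kk == 5) & has (fun j => l == l6 j) (iota 0 6)].
Fixpoint blists n := if n is n'.+1 then
  [seq b :: l | b <- [:: false; true], l <- blists n'] else [:: [::]].

Lemma blistsP l : l \in blists (size l).
Proof.
elim: l => [|b l IH] //.
change (b :: l \in [seq b :: l | b <- [:: false; true], l <- blists (size l)]).
by apply: allpairs_f => //; case: b.
Qed.

Lemma fin_fwd : all (fun l => all (fun r => all (fun kk => hyp l r kk ==> concl l r kk)
   (iota 0 6)) (iota 0 6)) (blists 6).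
Proof. by vm_compute. Qed.

Lemma fin_rev :
  all (fun j => all (fun kk => (kk %% 3 != 0) ==> good (l3 j) kk) (iota 0 6)) (iota 0 3) &&
  all (fun j => all (fun kk => ((kk == 1) || (kk == 5)) ==> good (l6 j) kk) (iota 0 6)) (iota 0 6).
Proof. by vm_compute. Qed.


Lemma fl_l3 j y : fl (l3 j) y = (y %% 3 == j).
Proof.
rewrite /fl /l3 (nth_map 0) ?size_iota ?ltn_pmod // nth_iota ?ltn_pmod // add0n.
by rewrite modn_dvdm.
Qed.

Lemma fl_l6 j y : fl (l6 j) y = (y %% 6 == j) || (y %% 6 == (j + 1) %% 6).
Proof.
by rewrite /fl /l6 (nth_map 0) ?size_iota ?ltn_pmod // nth_iota ?ltn_pmod // add0n.
Qed.

Lemma wit3 N x c : 3 %| N -> x < N -> c <= 2 * N -> x %% 3 = c %% 3 ->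
  exists i : 'I_N, x = (3 * i + c) %% N.
Proof.
move=> /eqP HN Hx Hc Hxc.
have Hi : (x + 2 * N - c) %/ 3 < N by lia.
exists (Ordinal Hi) => /=.
have -> : 3 * ((x + 2 * N - c) %/ 3) + c = 2 * N + x by lia.
by rewrite modnMDl modn_small.
Qed.

Lemma wit6 N x c : 6 %| N -> x < N -> c <= 2 * N -> x %% 6 = c %% 6 ->
  exists i : 'I_N, x = (6 * i + c) %% N.
Proof.
move=> /eqP HN Hx Hc Hxc.
have Hi : (x + 2 * N - c) %/ 6 < N by lia.
exists (Ordinal Hi) => /=.
have -> : 6 * ((x + 2 * N - c) %/ 6) + c = 2 * N + x by lia.
by rewrite modnMDl modn_small.
Qed.

Lemma memCj N j (x : gpvert N) : 3 %| N -> j < 3 ->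
  (x \in Cj N j) = fl (l3 j) (if x.2 then x.1 + 3 else x.1).
Proof.
move=> HN Hj; case: x => [[y Hy] b].
have -> : fl (l3 j) (if b then y + 3 else y) = (y %% 3 == j).
  by rewrite fl_l3; case: b => //; rewrite modnDr.
rewrite inE /=; apply/existsP/eqP.
  case=> i /eqP ->; rewrite modn_dvdm //; lia.
move=> H.
have [i Hi] : exists i : 'I_N, y = (3 * i + j) %% N.
  by apply: wit3 => //; lia.
by exists i; rewrite -Hi.
Qed.

Lemma memCpj N j (x : gpvert N) : 6 %| N -> j < 6 ->
  (x \in Cpj N j) = fl (l6 j) (if x.2 then x.1 + 3 else x.1).
Proof.
move=> HN Hj; case: x => [[y Hx] b].
have HN' := HN; move/eqP: HN' => HN'.
rewrite inE fl_l6 /=; case: b; apply/existsP/idP.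
- case=> i /orP [] /eqP Hi; apply/orP.
    by left; apply/eqP; move: Hi => /(congr1 (modn^~ 6)); rewrite modn_dvdm //=; lia.
  by right; apply/eqP; move: Hi => /(congr1 (modn^~ 6)); rewrite modn_dvdm //=; lia.
- case/orP => /eqP H.
    have [i Hi] : exists i : 'I_N, y = (6 * i + (j + 3)) %% N.
      by apply: wit6 => //; lia.
    by exists i; rewrite -addnA -Hi eqxx.
  have [i Hi] : exists i : 'I_N, y = (6 * i + (j + 4)) %% N.
    by apply: wit6 => //; lia.
  by exists i; rewrite -[6 * i + j + 4]addnA -Hi eqxx orbT.
- case=> i /orP [] /eqP Hi; apply/orP.
    by left; apply/eqP; move: Hi => /(congr1 (modn^~ 6)); rewrite modn_dvdm //=; lia.
  by right; apply/eqP; move: Hi => /(congr1 (modn^~ 6)); rewrite modn_dvdm //=; lia.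
- case/orP => /eqP H.
    have [i Hi] : exists i : 'I_N, y = (6 * i + j) %% N.
      by apply: wit6 => //; lia.
    by exists i; rewrite -Hi eqxx.
  have [i Hi] : exists i : 'I_N, y = (6 * i + (j + 1)) %% N.
    by apply: wit6 => //; lia.
  by exists i; rewrite -addnA -Hi eqxx orbT.
Qed.


Lemma fl_mod l x y : x %% 6 = y %% 6 -> fl l x = fl l y.
Proof. by rewrite /fl => ->. Qed.

Lemma good_all l (k : nat) : good l (k %% 6) -> forall m,
  ex1 (fl l m) (fl l (m + 2)) (fl l (m + 4)) &&
  ex1 (fl l (m + 3)) (fl l (m + 2 * k + 3)) (fl l (m + k)).
Proof.
move=> Hg m.
have := allP Hg (m %% 6); rewrite mem_iota ltn_pmod // => /(_ isT).
have e1 : fl l m = fl l (m %% 6) by apply: fl_mod; lia.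
have e2 : fl l (m + 2) = fl l (m %% 6 + 2) by apply: fl_mod; lia.
have e3 : fl l (m + 4) = fl l (m %% 6 + 4) by apply: fl_mod; lia.
have e4 : fl l (m + 3) = fl l (m %% 6 + 3) by apply: fl_mod; lia.
have e5 : fl l (m + 2 * k + 3) = fl l (m %% 6 + 2 * (k %% 6) + 3) by apply: fl_mod; lia.
have e6 : fl l (m + k) = fl l (m %% 6 + k %% 6) by apply: fl_mod; lia.
by rewrite e1 e2 e3 e4 e5 e6.
Qed.

Lemma ex1_shift a b c d : ex1 a b c -> ex1 b c d -> d = a.
Proof. by case: a; case: b; case: c; case: d. Qed.
Lemma ex1_third a b c d : ex1 a b c -> ex1 a b d -> d = c.
Proof. by case: a; case: b; case: c; case: d. Qed.

Lemma arith1 (i s N : nat) : 0 < N -> i + s * N - s + s = i + s * N.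
Proof. move=> HN; nia. Qed.
Lemma arith2 (b p q k : nat) : b + (p + 2) + q * k = b + p + q * k + 2.
Proof. lia. Qed.
Lemma arith3 (b p q k : nat) : b + p + (q + 2) * k = b + p + q * k + 2 * k.
Proof. nia. Qed.

Unset Implicit Arguments.

Theorem theorem1p2 (n : nat) (k : 'I_n) (C : {set gpvert n}) :
  3 <= n -> val k != 0 -> (2 * k) %% n != 0 ->
  (total_perfect_code k C <->
   ([/\ n %% 3 = 0, k %% 3 != 0 & exists2 j, j < 3 & C = Cj n j]
    \/ [/\ n %% 6 = 0, (k %% 6 = 1 \/ k %% 6 = 5) & exists2 j, j < 6 & C = Cpj n j])).
Proof.
case: n k C => [|n'] k C; first by case: k.
move=> Hn Hk0 Hk2.
rewrite (tpc_eq C Hn Hk2).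
pose A m := U n' m \in C.
pose B m := V n' m \in C.
have memC : forall x : gpvert n'.+1, (x \in C) = if x.2 then B x.1 else A x.1.
  case=> i []; rewrite /A /B.
    by have := V_val i 0; rewrite mul0n addn0 => ->.
  by have := U_val i 0; rewrite mul0n addn0 => ->.
have Aper : forall m c, A (m + c * n'.+1) = A m.
  by move=> m c; rewrite /A /U addnC modnMDl.
have Bper : forall m c, B (m + c * n'.+1) = B m.
  by move=> m c; rewrite /B /V addnC modnMDl.
split.
  move=> H.
  have HU : forall m, ex1 (A m) (A (m + 2)) (B (m + 1)) by move=> m; case/andP: (H m).
  have HV : forall m, ex1 (B m) (B (m + 2 * k)) (A (m + k)) by move=> m; case/andP: (H m).
  have H3 : forall i, ex1 (A i) (A (i + 2)) (A (i + 4)).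
    move=> i.
    pose s := 2 + 2 * k.
    pose base := i + s * n'.+1 - s.
    have L := @local (fun p q => A (base + p + q * k)) (fun p q => B (base + p + q * k)).
    have e1 : forall p q, base + (p + 1) + q * k = base + p + q * k + 1 by move=> p q; lia.
    have e2 : forall p q, base + p + (q + 1) * k = base + p + q * k + k by move=> p q; nia.
    move: L; rewrite /=.
    have Hs : s <= s * n'.+1 by rewrite leq_pmulr.
    have -> : base + 2 + 2 * k = i + s * n'.+1 by rewrite /base /s; lia.
    have -> : base + 4 + 2 * k = (i + 2) + s * n'.+1 by rewrite /base /s; lia.
    have -> : base + 6 + 2 * k = (i + 4) + s * n'.+1 by rewrite /base /s; lia.
    rewrite !Aper; apply.
      by move=> p q _ _; rewrite arith2 e1; apply: HU.
    by move=> p q _ _; rewrite arith3 e2; apply: HV.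
  have H6 : forall i, A (i + 6) = A i.
    move=> i; apply: (ex1_shift (H3 i)); have := H3 (i + 2); rewrite -!addnA; exact.
  have HB : forall m, B m = A (m + 3).
    move=> m.
    have := ex1_third (H3 (m + n')) (HU (m + n')).
    rewrite -!addnA !addn1 -(Bper m 1) mul1n => ->.
    by rewrite -(Aper (m + 3) 1) mul1n; congr A; lia.
  have Amod6 : forall i, A i = A (i %% 6).
    move=> i; rewrite {1}(divn_eq i 6); elim: (i %/ 6) => [|q IH].
      by rewrite mul0n add0n.
    have -> : q.+1 * 6 + i %% 6 = (q * 6 + i %% 6) + 6 by lia.
    by rewrite H6 IH.
  pose l := [seq A i | i <- iota 0 6].
  have HA : forall i, A i = fl l i.
    move=> i; rewrite /fl (nth_map 0) ?size_iota ?ltn_pmod // nth_iota ?ltn_pmod //.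
  have Hl : l \in blists 6 by have := blistsP l; rewrite size_map size_iota.
  have := allP (allP (allP fin_fwd l Hl) (n'.+1 %% 6) _) (k %% 6) _.
  rewrite !mem_iota !ltn_pmod // => /(_ isT isT) /implyP Himp.
  have Hhyp : hyp l (n'.+1 %% 6) (k %% 6).
    apply/andP; split.
      apply/allP => m _; rewrite -!HA; apply/andP; split; first exact: H3.
      have := HV m; rewrite !HB.
      have -> : A (m + 2 * k + 3) = A (m + 2 * (k %% 6) + 3).
        by rewrite Amod6 [RHS]Amod6; congr A; lia.
      have -> : A (m + k) = A (m + k %% 6).
        by rewrite Amod6 [RHS]Amod6; congr A; lia.
      done.
    apply/allP => m _; rewrite -!HA; apply/eqP.
    by rewrite -(Aper m 1) mul1n Amod6 [RHS]Amod6; congr A; lia.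
  case/orP: (Himp Hhyp) => /and3P [Hr Hkk /hasP [j Hj /eqP Hlj]]; rewrite mem_iota in Hj.
    left; split; first by move/eqP: Hr; rewrite modn_dvdm.
      by move: Hkk; rewrite modn_dvdm.
    have HN3 : 3 %| n'.+1 by rewrite /dvdn -(@modn_dvdm 6).
    exists j; first by lia.
    apply/setP => x; rewrite memC memCj //.
    by case: x.2; rewrite ?HB HA Hlj.
  right; split; first by apply/eqP.
    by case/orP: Hkk => /eqP ->; [left | right].
  have HN6 : 6 %| n'.+1 by [].
  exists j; first by lia.
  apply/setP => x; rewrite memC memCpj //.
  by case: x.2; rewrite ?HB HA Hlj.
case=> [[HN3 Hk3 [j Hj HC]] | [HN6 Hk6 [j Hj HC]]].
  have HN : 3 %| n'.+1 by apply/eqP.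
  have eA : forall m, A m = fl (l3 j) m.
    move=> m; rewrite /A HC memCj //= val_inord_mod !fl_l3.
    by rewrite modn_dvdm.
  have eB : forall m, B m = fl (l3 j) (m + 3).
    move=> m; rewrite /B HC memCj //= val_inord_mod !fl_l3.
    by rewrite !modnDr modn_dvdm.
  have Hg : good (l3 j) (k %% 6).
    have /andP [F _] := fin_rev.
    have := allP (allP F j _) (k %% 6) _.
    rewrite !mem_iota ltn_pmod // Hj => /(_ isT isT) /implyP; apply.
    by rewrite modn_dvdm.
  move=> m; change (ex1 (A m) (A (m + 2)) (B (m + 1)) && ex1 (B m) (B (m + 2 * k)) (A (m + k))).
  rewrite !eA !eB -addnA; exact: good_all Hg m.
have HN : 6 %| n'.+1 by apply/eqP.
have eA : forall m, A m = fl (l6 j) m.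
  by move=> m; rewrite /A HC memCpj //= val_inord_mod /fl modn_dvdm.
have eB : forall m, B m = fl (l6 j) (m + 3).
  by move=> m; rewrite /B HC memCpj //= val_inord_mod /fl -modnDml modn_dvdm // modnDml.
have Hg : good (l6 j) (k %% 6).
  have /andP [_ F] := fin_rev.
  have := allP (allP F j _) (k %% 6) _.
  rewrite !mem_iota ltn_pmod // Hj => /(_ isT isT) /implyP; apply.
  by case: Hk6 => ->.
move=> m; change (ex1 (A m) (A (m + 2)) (B (m + 1)) && ex1 (B m) (B (m + 2 * k)) (A (m + k))).
  rewrite !eA !eB -addnA; exact: good_all Hg m.
Qed.
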